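(* Let $\Gamma\subseteq\mathit{Aff}(2,\mathbb{H})$ be an abelian subgroup acting freely on $\mathbb{H}^2$. Then $\Gamma$ is conjugate in $\mathit{Aff}(2,\mathbb{H})$ either to a subgroup of the group of all matrices $\begin{pmatrix} 1&0&r\\ 0&d&0\\ 0&0&1\end{pmatrix}$ with $r,d\in\mathbb{H}$, $d\neq0$, or to a subgroup of the group of all matrices $\begin{pmatrix} 1&b&r\\ 0&1&s\\ 0&0&1\end{pmatrix}$ with $b,r,s\in\mathbb{H}$.
   Context: $\mathit{Aff}(2,\mathbb{H})$ is identified with invertible $3\times3$ quaternionic matrices $\begin{pmatrix} a&b&r\\ c&d&s\\ 0&0&1\end{pmatrix}$ acting on $(x,y)\in\mathbb{H}^2$ by $(x,y)\mapsto(ax+by+r,cx+dy+s)$. *)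

(* Defs.v *)
From HB Require Import structures.
From mathcomp Require Import all_boot all_order all_algebra.
From mathcomp Require Import reals.
Set Implicit Arguments. Unset Strict Implicit. Unset Printing Implicit Defensive.
Import Order.TTheory GRing.Theory Num.Theory.
Local Open Scope ring_scope.

Section Quat.
Variable R : realType.

(* Quaternions H = R + R i + R j + R k *)
Record quat := Quat { q0 : R; q1 : R; q2 : R; q3 : R }.

Definition qzero : quat := Quat 0 0 0 0.
Definition qone : quat := Quat 1 0 0 0.
Definition qadd (p q : quat) : quat :=
  Quat (q0 p + q0 q) (q1 p + q1 q) (q2 p + q2 q) (q3 p + q3 q).
(* Hamilton product, i^2 = j^2 = k^2 = ijk = -1 *)
Definition qmul (p q : quat) : quat :=
  Quat (q0 p * q0 q - q1 p * q1 q - q2 p * q2 q - q3 p * q3 q)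
       (q0 p * q1 q + q1 p * q0 q + q2 p * q3 q - q3 p * q2 q)
       (q0 p * q2 q - q1 p * q3 q + q2 p * q0 q + q3 p * q1 q)
       (q0 p * q3 q + q1 p * q2 q - q2 p * q1 q + q3 p * q0 q).

(* An element of Aff(2,H): the 3x3 quaternionic matrix
     ( a b r )
     ( c d s )
     ( 0 0 1 ) *)
Record aff := Aff { aa : quat; ab : quat; ac : quat; ad : quat;
                    ar : quat; as_ : quat }.

Definition aff1 : aff := Aff qone qzero qzero qone qzero qzero.

Definition aff_mul (g h : aff) : aff :=
  Aff (qadd (qmul (aa g) (aa h)) (qmul (ab g) (ac h)))
      (qadd (qmul (aa g) (ab h)) (qmul (ab g) (ad h)))
      (qadd (qmul (ac g) (aa h)) (qmul (ad g) (ac h)))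
      (qadd (qmul (ac g) (ab h)) (qmul (ad g) (ad h)))
      (qadd (qadd (qmul (aa g) (ar h)) (qmul (ab g) (as_ h))) (ar g))
      (qadd (qadd (qmul (ac g) (ar h)) (qmul (ad g) (as_ h))) (as_ g)).

Definition aff_invertible (g : aff) : Prop :=
  exists h, aff_mul g h = aff1 /\ aff_mul h g = aff1.

Definition aff_act (g : aff) (p : quat * quat) : quat * quat :=
  (qadd (qadd (qmul (aa g) p.1) (qmul (ab g) p.2)) (ar g),
   qadd (qadd (qmul (ac g) p.1) (qmul (ad g) p.2)) (as_ g)).

Definition is_subgroup (G : aff -> Prop) : Prop :=
  (forall g, G g -> aff_invertible g) /\
  G aff1 /\
  (forall g h, G g -> G h -> G (aff_mul g h)) /\
  (forall g, G g -> exists h, G h /\ aff_mul g h = aff1 /\ aff_mul h g = aff1).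

Definition is_abelian (G : aff -> Prop) : Prop :=
  forall g h, G g -> G h -> aff_mul g h = aff_mul h g.

Definition acts_freely (G : aff -> Prop) : Prop :=
  forall g p, G g -> aff_act g p = p -> g = aff1.

Definition typeI (g : aff) : Prop :=
  aa g = qone /\ ab g = qzero /\ ac g = qzero /\ ad g <> qzero /\ as_ g = qzero.

Definition typeII (g : aff) : Prop :=
  aa g = qone /\ ac g = qzero /\ ad g = qone.

Definition conj_into (G K : aff -> Prop) : Prop :=
  exists P Q, aff_mul P Q = aff1 /\ aff_mul Q P = aff1 /\
    forall g, G g -> K (aff_mul (aff_mul P g) Q).

End Quat.

(* Main.v *)
Require Import Defs.
From mathcomp Require Import all_boot all_order all_algebra reals.
From HB Require Import structures.
From mathcomp Require Import all_boot all_order all_algebra reals ring lra.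
From Stdlib Require Import Classical.
Set Implicit Arguments. Unset Strict Implicit.
Import Order.TTheory GRing.Theory Num.Theory.
Local Open Scope ring_scope.

Section S.
Variable R : realType.
Local Notation quat := (quat R).
Local Notation aff := (aff R).
Local Notation qzero := (qzero R).
Local Notation qone := (qone R).
Local Notation aff1 := (aff1 R).

Definition qopp (p : quat) := Quat (- q0 p) (- q1 p) (- q2 p) (- q3 p).
Definition qsub (p q : quat) := qadd p (qopp q).
Definition qn (p : quat) : R := q0 p ^+ 2 + q1 p ^+ 2 + q2 p ^+ 2 + q3 p ^+ 2.
Definition qinv (p : quat) :=
  Quat (q0 p / qn p) (- q1 p / qn p) (- q2 p / qn p) (- q3 p / qn p).

Lemma quat_ext (p q : quat) : q0 p = q0 q -> q1 p = q1 q -> q2 p = q2 q -> q3 p = q3 q -> p = q.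
Proof. by case: p; case: q => /= ? ? ? ? ? ? ? ? -> -> -> ->. Qed.

Lemma aff_ext (g h : aff) : aa g = aa h -> ab g = ab h -> ac g = ac h -> ad g = ad h ->
  ar g = ar h -> as_ g = as_ h -> g = h.
Proof. by case: g; case: h => /= ? ? ? ? ? ? ? ? ? ? ? ? -> -> -> -> -> ->. Qed.

Ltac qunf := cbv [qsub qopp qmul qadd Defs.qone Defs.qzero q0 q1 q2 q3].
Ltac qring := apply: quat_ext; qunf => /=; ring.
Ltac aring := apply: aff_ext; rewrite ?/aff_mul ?/Defs.aff1 /=; qring.

Lemma qn_neq0 (p : quat) : p <> qzero -> qn p != 0.
Proof.
move=> hp; apply/eqP => h; apply: hp; rewrite /qn in h.
have h0 : q0 p = 0 by nra.
have h1 : q1 p = 0 by nra.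
have h2 : q2 p = 0 by nra.
have h3 : q3 p = 0 by nra.
by apply: quat_ext.
Qed.

Lemma qmulV (p : quat) : p <> qzero -> qmul p (qinv p) = qone.
Proof. move=> /qn_neq0 h; apply: quat_ext; move: h; rewrite /qmul /qinv /Defs.qone /qn /= => h; field; exact: h.
Qed.
Lemma qmulVl (p : quat) : p <> qzero -> qmul (qinv p) p = qone.
Proof. move=> /qn_neq0 h; apply: quat_ext; move: h; rewrite /qmul /qinv /Defs.qone /qn /= => h; field; exact: h.
Qed.

Lemma qmulA (p q r : quat) : qmul (qmul p q) r = qmul p (qmul q r).
Proof. qring. Qed.

Lemma qmul_eq0 (p q : quat) : qmul p q = qzero -> p = qzero \/ q = qzero.
Proof.
move=> h; case: (classic (p = qzero)) => hp; [by left|right].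
have -> : q = qmul (qinv p) (qmul p q) by rewrite -qmulA qmulVl //; qring.
rewrite h; qring.
Qed.

Lemma qsub0 (p q : quat) : qsub p q = qzero -> p = q.
Proof. move=> h; apply: quat_ext; move: (congr1 (@q0 R) h) (congr1 (@q1 R) h) (congr1 (@q2 R) h) (congr1 (@q3 R) h);
  rewrite /= => *; lra. Qed.

Lemma qeq_from (L Rr X Y : quat) : L = Rr -> qsub X Y = qsub L Rr -> X = Y.
Proof. move=> -> h; apply: qsub0; rewrite h; qring. Qed.

Lemma aff_mulA (g h k : aff) : aff_mul (aff_mul g h) k = aff_mul g (aff_mul h k).
Proof. aring. Qed.
Lemma aff_mul1 (g : aff) : aff_mul g aff1 = g.
Proof. aring. Qed.
Lemma aff_1mul (g : aff) : aff_mul aff1 g = g.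
Proof. aring. Qed.
Lemma aff_act_mul (g h : aff) (p : quat * quat) : aff_act (aff_mul g h) p = aff_act g (aff_act h p).
Proof. case: p => x y. rewrite /aff_act /=. congr pair. qring. qring. Qed.
Lemma aff_act1 (p : quat * quat) : aff_act aff1 p = p.
Proof. case: p => x y; rewrite /aff_act /=; congr pair; qring. Qed.

Lemma qone_neq0 : qone <> qzero.
Proof. move/(congr1 (@q0 R)) => /= /eqP; by rewrite oner_eq0. Qed.

Lemma qeq_from' (L Rr X Y : quat) : L = Rr -> qsub X Y = qsub Rr L -> X = Y.
Proof. move=> -> h; apply: qsub0; rewrite h; qring. Qed.

Lemma qsub_neq0 (a b : quat) : a <> b -> qsub a b <> qzero.
Proof. by move=> h /qsub0. Qed.

Lemma qmul_neq0_r (b u : quat) : qmul b u = qzero -> b <> qzero -> u = qzero.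
Proof. by move=> /qmul_eq0 [] . Qed.
Lemma qmul_neq0_l (b u : quat) : qmul u b = qzero -> b <> qzero -> u = qzero.
Proof. by move=> /qmul_eq0 [] // ->. Qed.

Definition good (G : aff -> Prop) :=
  is_abelian G /\ acts_freely G /\ (forall g h, G g -> G h -> G (aff_mul g h)) /\
  (forall g, G g -> aff_invertible g).

Definition conjset (P Q : aff) (G : aff -> Prop) :=
  fun k => exists g, G g /\ k = aff_mul (aff_mul P g) Q.

Lemma conj_mul (P Q g h : aff) : aff_mul Q P = aff1 ->
  aff_mul (aff_mul (aff_mul P g) Q) (aff_mul (aff_mul P h) Q) = aff_mul (aff_mul P (aff_mul g h)) Q.
Proof.
move=> QP; rewrite !aff_mulA; congr (aff_mul P); congr (aff_mul g).
by rewrite -(aff_mulA Q P) QP aff_1mul.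
Qed.

Lemma good_conj (P Q : aff) G : aff_mul P Q = aff1 -> aff_mul Q P = aff1 -> good G -> good (conjset P Q G).
Proof.
move=> PQ QP [Hab [Hfr [Hmul Hinv]]]; split; [|split; [|split]].
- move=> _ _ [g [Gg ->]] [h [Gh ->]]; rewrite !conj_mul //; by rewrite (Hab g h).
- move=> _ p [g [Gg ->]] hp.
  have : aff_act g (aff_act Q p) = aff_act Q p.
    transitivity (aff_act (aff_mul Q P) (aff_act g (aff_act Q p))); first by rewrite QP aff_act1.
    by rewrite !aff_act_mul -[in RHS]hp !aff_act_mul.
  by move/(Hfr _ _ Gg) => ->; rewrite aff_mul1 PQ.
- move=> _ _ [g [Gg ->]] [h [Gh ->]]; rewrite conj_mul //; exists (aff_mul g h); split => //; exact: Hmul.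
- move=> _ [g [Gg ->]]; have [k [gk kg]] := Hinv g Gg.
  exists (aff_mul (aff_mul P k) Q); rewrite !conj_mul // ?gk ?kg aff_mul1 //.
Qed.

Lemma conj_trans (P Q : aff) G K : aff_mul P Q = aff1 -> aff_mul Q P = aff1 ->
  conj_into (conjset P Q G) K -> conj_into G K.
Proof.
move=> PQ QP [P2 [Q2 [PQ2 [QP2 H]]]].
exists (aff_mul P2 P), (aff_mul Q Q2); split; [|split].
- by rewrite !aff_mulA -(aff_mulA P Q) PQ aff_1mul.
- by rewrite !aff_mulA -(aff_mulA Q2 P2) QP2 aff_1mul.
- move=> g Gg; have := H (aff_mul (aff_mul P g) Q) (ex_intro _ g (conj Gg erefl)).
  by rewrite !aff_mulA.
Qed.

Lemma conj_id (G K : aff -> Prop) : (forall h, G h -> K h) -> conj_into G K.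
Proof.
move=> H; exists aff1, aff1; rewrite aff_mul1; split => //; split => //.
by move=> g Gg; rewrite aff_1mul aff_mul1; apply: H.
Qed.

End S.

Ltac qunf := cbv [qsub qopp qmul qadd Defs.qone Defs.qzero q0 q1 q2 q3].
Ltac qring := apply: quat_ext; qunf => /=; ring.

Section S2.
Variable R : realType.
Local Notation quat := (quat R).
Local Notation aff := (aff R).
Local Notation qzero := (qzero R).
Local Notation qone := (qone R).
Local Notation aff1 := (aff1 R).

Lemma pair_eq2 (A B : Type) (a c : A) (b d : B) : a = c -> b = d -> (a, b) = (c, d).
Proof. by move=> -> ->. Qed.

Lemma triangle (g : aff) : ac g = qzero -> aa g <> qone -> ad g <> qone ->
  exists p, aff_act g p = p.
Proof.
case: g => a b c d r s /= hc ha hd; subst c.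
have Hi := qmulV (qsub_neq0 ha); have Hi' := qmulVl (qsub_neq0 ha).
have Hj := qmulV (qsub_neq0 hd); have Hj' := qmulVl (qsub_neq0 hd).
move: (qinv (qsub a qone)) (qinv (qsub d qone)) Hi Hi' Hj Hj' => i j Hi Hi' Hj Hj'.
pose x2 := qopp (qmul j s).
pose x1 := qopp (qmul i (qadd (qmul b x2) r)).
exists (x1, x2); rewrite /aff_act /=; apply: pair_eq2.
- transitivity (qadd x1 (qmul (qsub qone (qmul (qsub a qone) i)) (qadd (qmul b x2) r))).
    rewrite /x1 /x2; qring.
  rewrite Hi; qring.
- transitivity (qadd x2 (qmul (qsub qone (qmul (qsub d qone) j)) s)).
    rewrite /x1 /x2; qring.
  rewrite Hj; qring.
Qed.

Lemma fixvec (g : aff) : (forall p, aff_act g p <> p) ->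
  exists x1 x2, (x1 <> qzero \/ x2 <> qzero) /\
    qadd (qmul (aa g) x1) (qmul (ab g) x2) = x1 /\
    qadd (qmul (ac g) x1) (qmul (ad g) x2) = x2.
Proof.
case: g => a b c d r s /= nf.
case: (classic (qsub a qone = qzero)) => ha.
- have {ha} ha := qsub0 ha; subst a.
  case: (classic (c = qzero)) => hc.
  + subst c; exists qone, qzero; split; first by left; exact: qone_neq0.
    split; qring.
  + have Hk := qmulV hc; have Hk' := qmulVl hc.
    move: (qinv c) Hk Hk' => k Hk Hk'.
    case: (classic (b = qzero)) => hb.
    * subst b; exists (qopp (qmul k (qsub d qone))), qone.
      split; first by right; exact: qone_neq0.
      split; first qring.
      transitivity (qadd qone (qmul (qsub qone (qmul c k)) (qsub d qone))); first qring.
      rewrite Hk; qring.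
    * have Hb := qmulV hb; have Hb' := qmulVl hb.
      move: (qinv b) Hb Hb' => l Hb Hb'.
      exfalso.
      pose x2 := qopp (qmul l r).
      pose x1 := qopp (qmul k (qadd (qmul (qsub d qone) x2) s)).
      apply: (nf (x1, x2)); rewrite /aff_act /=; apply: pair_eq2.
      - transitivity (qadd x1 (qmul (qsub qone (qmul b l)) r)).
          rewrite /x1 /x2; qring.
        rewrite Hb; qring.
      - transitivity (qadd x2 (qmul (qsub qone (qmul c k)) (qadd (qmul (qsub d qone) x2) s))).
          rewrite /x1 /x2; qring.
        rewrite Hk; qring.
- have Hi := qmulV ha; have Hi' := qmulVl ha.
  move: (qinv (qsub a qone)) Hi Hi' => i Hi Hi'.
  case: (classic (qsub (qsub d qone) (qmul c (qmul i b)) = qzero)) => hs.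
  + exists (qopp (qmul i b)), qone; split; first by right; exact: qone_neq0.
    split.
    * transitivity (qadd (qopp (qmul i b)) (qmul (qsub qone (qmul (qsub a qone) i)) b)); first qring.
      rewrite Hi; qring.
    * transitivity (qadd qone (qsub (qsub d qone) (qmul c (qmul i b)))); first qring.
      rewrite hs; qring.
  + have Hj := qmulV hs; have Hj' := qmulVl hs.
    move: (qinv _) Hj Hj' => j Hj Hj'.
    exfalso.
    pose w := qsub (qmul c (qmul i r)) s.
    pose x2 := qmul j w.
    pose x1 := qopp (qmul i (qadd (qmul b x2) r)).
    apply: (nf (x1, x2)); rewrite /aff_act /=; apply: pair_eq2.
    * transitivity (qadd x1 (qmul (qsub qone (qmul (qsub a qone) i)) (qadd (qmul b x2) r))).
        rewrite /x1 /x2 /w; qring.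
      rewrite Hi; qring.
    * transitivity (qadd x2 (qmul (qsub (qmul (qsub (qsub d qone) (qmul c (qmul i b))) j) qone) w)).
        rewrite /x1 /x2 /w; qring.
      rewrite Hj; qring.
Qed.

Lemma normal_form (g : aff) : (forall p, aff_act g p <> p) ->
  exists P Q, aff_mul P Q = aff1 /\ aff_mul Q P = aff1 /\
    aa (aff_mul (aff_mul P g) Q) = qone /\ ac (aff_mul (aff_mul P g) Q) = qzero.
Proof.
move=> /fixvec [x1 [x2 [hx [Hk1 Hk2]]]].
move: Hk1 Hk2; case: g => a b c d r s /= Hk1 Hk2.
case: (classic (x1 = qzero)) => h1.
- subst x1; have h2 : x2 <> qzero by case: hx.
  have Hj := qmulV h2; have Hj' := qmulVl h2.
  move: (qinv x2) Hj Hj' => j Hj Hj'.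
  exists (Aff qzero j qone qzero qzero qzero), (Aff qzero qone x2 qzero qzero qzero).
  split; [|split; [|split]].
  + apply: aff_ext; rewrite /aff_mul /=; try qring.
    transitivity (qmul j x2); first qring. exact: Hj'.
  + apply: aff_ext; rewrite /aff_mul /=; try qring.
    transitivity (qmul x2 j); first qring. exact: Hj.
  + rewrite /aff_mul /=.
    transitivity (qmul j (qadd (qmul c qzero) (qmul d x2))); first qring.
    by rewrite Hk2 Hj'.
  + rewrite /aff_mul /=.
    transitivity (qadd (qmul a qzero) (qmul b x2)); first qring.
    by rewrite Hk1.
- have Hi := qmulV h1; have Hi' := qmulVl h1.
  move: (qinv x1) Hi Hi' => i Hi Hi'.
  exists (Aff i qzero (qopp (qmul x2 i)) qone qzero qzero), (Aff x1 qzero x2 qone qzero qzero).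
  split; [|split; [|split]].
  + apply: aff_ext; rewrite /aff_mul /=; try qring.
    * transitivity (qmul i x1); first qring. exact: Hi'.
    * transitivity (qmul x2 (qsub qone (qmul i x1))); first qring.
      rewrite Hi'; qring.
  + apply: aff_ext; rewrite /aff_mul /=; try qring.
    transitivity (qmul x1 i); first qring. exact: Hi.
  + rewrite /aff_mul /=.
    transitivity (qmul i (qadd (qmul a x1) (qmul b x2))); first qring.
    by rewrite Hk1 Hi'.
  + rewrite /aff_mul /=.
    transitivity (qadd (qmul (qopp (qmul x2 i)) (qadd (qmul a x1) (qmul b x2))) (qadd (qmul c x1) (qmul d x2))); first qring.
    rewrite Hk1 Hk2.
    transitivity (qmul x2 (qsub qone (qmul i x1))); first qring.
    rewrite Hi'; qring.
Qed.

Lemma caseA G (g0 : aff) : good G -> G g0 -> aa g0 = qone -> ac g0 = qzero -> ad g0 = qone ->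
  ab g0 <> qzero -> forall h, G h -> typeII h.
Proof.
move=> [Hab [Hfr [Hmul Hinv]]] G0 h1 h2 h3 hb h Gh.
have E := Hab _ _ G0 Gh.
move: G0 E h1 h2 h3 hb; case: g0 => a b c d r s /= G0 E h1 h2 h3 hb; subst a c d.
move: Gh E; case: h => p q u s' r' t' Gh E.
have E1 := congr1 (@aa R) E; have E2 := congr1 (@ab R) E; rewrite /= in E1 E2.
have Hu : u = qzero.
  apply: (qmul_neq0_r _ hb); apply: (qeq_from E1); qring.
subst u.
have H2 : qmul b s' = qmul p b by apply: (qeq_from E2); qring.
have [-> ->] : p = qone /\ s' = qone.
  case: (classic (p = qone)) => hp.
  - subst p; split => //; apply: qsub0; apply: (qmul_neq0_r _ hb); apply: (qeq_from H2); qring.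
  - case: (classic (s' = qone)) => hs.
    + subst s'; exfalso; apply: hp; apply: qsub0; apply: (qmul_neq0_l _ hb); apply: (qeq_from' H2); qring.
    + exfalso; have [x hx] := triangle (g := Aff p q qzero s' r' t') erefl hp hs.
      have := Hfr _ x Gh hx => /(congr1 (@aa R)) /=; exact: hp.
by rewrite /typeII.
Qed.

Lemma caseB G (g0 : aff) : good G -> G g0 -> aa g0 = qone -> ab g0 = qzero -> ac g0 = qzero ->
  ad g0 <> qone -> as_ g0 = qzero -> forall h, G h -> typeI h.
Proof.
move=> [Hab [Hfr [Hmul Hinv]]] G0 h1 h2 h3 hd h5 h Gh.
have E := Hab _ _ G0 Gh.
have G0h := Hmul _ _ G0 Gh.
have [k [hk _]] := Hinv _ Gh.
move: G0 E G0h h1 h2 h3 hd h5; case: g0 => a b c d r0 s0 /= G0 E G0h h1 h2 h3 hd h5; subst a b c s0.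
move: Gh E G0h hk; case: h => p q u s r t Gh E G0h hk.
have hd' : qsub qone d <> qzero by apply: qsub_neq0 => e; apply: hd; rewrite e.
have hd'' : qsub d qone <> qzero := qsub_neq0 hd.
have E2 := congr1 (@ab R) E; have E3 := congr1 (@ac R) E; have E6 := congr1 (@as_ R) E.
rewrite /= in E2 E3 E6.
have Hq : q = qzero by apply: (qmul_neq0_l _ hd'); apply: (qeq_from E2); qring.
have Hu : u = qzero by apply: (qmul_neq0_r _ hd''); apply: (qeq_from E3); qring.
subst q u.
have Ht : t = qzero by apply: (qmul_neq0_r _ hd''); apply: (qeq_from E6); qring.
subst t.
have Hp : p = qone.
  case: (classic (p = qone)) => // hp; exfalso.
  case: (classic (s = qone)) => hs.
  - subst s.
    set g1 := aff_mul (Aff qone qzero qzero d r0 qzero) (Aff p qzero qzero qone r qzero).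
    have c1 : ac g1 = qzero by rewrite /g1 /aff_mul /=; qring.
    have c2 : aa g1 <> qone by rewrite /g1 /aff_mul /= => e; apply: hp; rewrite -e; qring.
    have c3 : ad g1 <> qone by rewrite /g1 /aff_mul /= => e; apply: hd; rewrite -e; qring.
    have [x hx] := triangle c1 c2 c3.
    have := Hfr _ x G0h hx => /(congr1 (@aa R)); rewrite /aff_mul /= => e.
    apply: hp; rewrite -e; qring.
  - have [x hx] := triangle (g := Aff p qzero qzero s r qzero) erefl hp hs.
    have := Hfr _ x Gh hx => /(congr1 (@aa R)) /=; exact: hp.
subst p.
have hs0 : s <> qzero.
  move=> es; subst s; apply: (@qone_neq0 R).
  have E' : qadd (qmul qzero (ab k)) (qmul qzero (ad k)) = qone := congr1 (@ad R) hk.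
  rewrite -E'; qring.
by rewrite /typeI /=.
Qed.

Lemma caseC G (g0 : aff) : good G -> G g0 -> aa g0 = qone -> ac g0 = qzero ->
  ~ (ab g0 = qzero /\ ad g0 = qone) -> conj_into G (@typeI R) \/ conj_into G (@typeII R).
Proof.
move=> gG G0 h1 h3 hn.
case: (classic (ad g0 = qone)) => hd.
- right; apply: conj_id => h Gh; apply: (caseA gG G0 h1 h3 hd _ Gh).
  by move=> hb; apply: hn.
- left; move: G0 h1 h3 hn hd; case: g0 => a b c d r s /= G0 h1 h3 hn hd; subst a c.
  have He := qmulV (qsub_neq0 hd); have He' := qmulVl (qsub_neq0 hd).
  move: (qinv _) He He' => e He He'.
  pose bt := qopp (qmul b e). pose t2 := qmul e s.
  pose P := Aff qone bt qzero qone qzero t2.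
  pose Q := Aff qone (qopp bt) qzero qone (qmul bt t2) (qopp t2).
  have PQ : aff_mul P Q = aff1 by rewrite /P /Q; apply: aff_ext; rewrite /aff_mul /=; qring.
  have QP : aff_mul Q P = aff1 by rewrite /P /Q; apply: aff_ext; rewrite /aff_mul /=; qring.
  apply: (conj_trans PQ QP); apply: conj_id => h Gh'.
  apply: (caseB (good_conj PQ QP gG) (g0 := aff_mul (aff_mul P (Aff qone b qzero d r s)) Q)) => //.
  + by exists (Aff qone b qzero d r s).
  + rewrite /P /Q /aff_mul /=; qring.
  + rewrite /P /Q /aff_mul /=.
    transitivity (qmul b (qsub qone (qmul e (qsub d qone)))); first by rewrite /bt /t2; qring.
    rewrite He'; qring.
  + rewrite /P /Q /aff_mul /=; qring.
  + rewrite /P /Q /aff_mul /= => E; apply: hd; rewrite -E; qring.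
  + rewrite /P /Q /aff_mul /=.
    transitivity (qmul (qsub qone (qmul (qsub d qone) e)) s); first by rewrite /bt /t2; qring.
    rewrite He; qring.
Qed.

End S2.

Theorem mainTheorem11 (R : realType) (Gamma : aff R -> Prop) :
  is_subgroup Gamma -> is_abelian Gamma -> acts_freely Gamma ->
  conj_into Gamma (@typeI R) \/ conj_into Gamma (@typeII R).
Proof.
move=> [Hinv [H1 [Hmul Hinvs]]] Hab Hfr.
have gG : good Gamma by split; [|split; [|split]].
case: (classic (exists g0, Gamma g0 /\ ~ (aa g0 = Defs.qone R /\ ab g0 = Defs.qzero R /\
   ac g0 = Defs.qzero R /\ ad g0 = Defs.qone R))) => [[g0 [G0 hn]] | hall]; last first.
  right; apply: conj_id => h Gh.
  case: (classic (aa h = Defs.qone R /\ ab h = Defs.qzero R /\ ac h = Defs.qzero R /\ ad h = Defs.qone R)) => [[? [? [? ?]]]| hn].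
    by split.
  by exfalso; apply: hall; exists h.
have nf : forall p, aff_act g0 p <> p.
  by move=> p hp; apply: hn; rewrite (Hfr _ _ G0 hp).
have [P [Q [PQ [QP [ha hc]]]]] := normal_form nf.
have gG' := good_conj PQ QP gG.
have G0' : conjset P Q Gamma (aff_mul (aff_mul P g0) Q) by exists g0.
have hn' : ~ (ab (aff_mul (aff_mul P g0) Q) = Defs.qzero R /\ ad (aff_mul (aff_mul P g0) Q) = Defs.qone R).
  move=> [hb hd]; apply: hn.
  have eg : g0 = aff_mul (aff_mul Q (aff_mul (aff_mul P g0) Q)) P.
    by rewrite !aff_mulA QP aff_mul1 -aff_mulA QP aff_1mul.
  move: (aff_mul (aff_mul P g0) Q) ha hc hb hd eg => g' ha hc hb hd.
  case: g' ha hc hb hd => a' b' c' d' r' s' /= ha hc hb hd ->; subst.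
  split; [|split; [|split]].
  - transitivity (aa (aff_mul Q P)); last by rewrite QP.
    rewrite /aff_mul /=; qring.
  - transitivity (ab (aff_mul Q P)); last by rewrite QP.
    rewrite /aff_mul /=; qring.
  - transitivity (ac (aff_mul Q P)); last by rewrite QP.
    rewrite /aff_mul /=; qring.
  - transitivity (ad (aff_mul Q P)); last by rewrite QP.
    rewrite /aff_mul /=; qring.
case: (caseC gG' G0' ha hc hn') => H; [left|right]; exact: (conj_trans PQ QP H).
Qed.
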